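(* Fix integers $k \ge 1$ and $n \ge 1$. For every database $D$ of $n$ rows and every neighboring database $D'$, $|\mathrm{SSA}(D) - \mathrm{SSA}(D')| \le 9 + 5/n$. That is, the sensitivity of $\mathrm{SSA}$ is at most $9 + 5/n$.
   Context: A database $D$ consists of $n$ rows. Each row is a pair $(g, y)$ with group label $g \in \{1,\dots,k\}$ and response value $y \in [0,1]$; the number of groups $k$ is fixed. For group $i$ let $n_i$ be the number of rows with label $i$, so $\sum_i n_i = n$. Let $\overline{y}_i$ be the mean response in group $i$, and let $\overline{y}$ be the mean of all $n$ responses; groups with $n_i = 0$ contribute nothing. Define $\mathrm{SSA}(D) = \sum_{i=1}^k n_i(\overline{y}_i - \overline{y})^2$. Two databases with $n$ rows each are neighboring if they differ in exactly one row; the changed row may have a different group label and/or a different response value. The sensitivity of a real-valued function $f$ on databases is $\max |f(D) - f(D')|$, taken over all neighboring pairs. *)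

(* Defs.v *)
From Stdlib Require Import Reals Lra List.
Import ListNotations.
Open Scope R_scope.

(* A row is a pair (group label g, response y). *)
Definition row := (nat * R)%type.

Definition valid_db (k n : nat) (D : list row) : Prop :=
  length D = n /\
  Forall (fun r => (1 <= fst r <= k)%nat /\ 0 <= snd r <= 1) D.

Definition group_count (D : list row) (i : nat) : R :=
  fold_right (fun r acc => (if Nat.eqb (fst r) i then 1 else 0) + acc) 0 D.

Definition group_sum (D : list row) (i : nat) : R :=
  fold_right (fun r acc => (if Nat.eqb (fst r) i then snd r else 0) + acc) 0 D.

Definition total_sum (D : list row) : R :=
  fold_right (fun r acc => snd r + acc) 0 D.

Definition overall_mean (D : list row) : R :=
  total_sum D / INR (length D).

(* Group mean  ybar_i  (only used when n_i > 0). *)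
Definition group_mean (D : list row) (i : nat) : R :=
  group_sum D i / group_count D i.

Definition ssa_term (D : list row) (i : nat) : R :=
  if Req_EM_T (group_count D i) 0 then 0
  else group_count D i * (group_mean D i - overall_mean D) ^ 2.

Definition SSA (k : nat) (D : list row) : R :=
  fold_right Rplus 0 (map (ssa_term D) (seq 1 k)).

Definition neighboring (D D' : list row) : Prop :=
  length D = length D' /\
  exists j, (j < length D)%nat /\
    forall m, m <> j -> nth_error D m = nth_error D' m.

(* Main.v *)
Require Import Defs.
From Stdlib Require Import Reals List.
From Stdlib Require Import Lra Lia Psatz.
Open Scope R_scope.

Definition sumL (l : list nat) (f : nat -> R) : R := fold_right Rplus 0 (map f l).

Lemma sumL_ext l f g : (forall i, In i l -> f i = g i) -> sumL l f = sumL l g.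
Proof.
  induction l as [|a l IH]; intros H; simpl; auto.
  unfold sumL in *; simpl. rewrite H by (left; auto). rewrite IH; auto.
  intros; apply H; right; auto.
Qed.

Lemma sumL_plus l f g : sumL l (fun i => f i + g i) = sumL l f + sumL l g.
Proof. induction l; unfold sumL in *; simpl; [lra|]. rewrite IHl. lra. Qed.

Lemma sumL_minus l f g : sumL l (fun i => f i - g i) = sumL l f - sumL l g.
Proof. induction l; unfold sumL in *; simpl; [lra|]. rewrite IHl. lra. Qed.

Lemma sumL_scal l c f : sumL l (fun i => c * f i) = c * sumL l f.
Proof. induction l; unfold sumL in *; simpl; [lra|]. rewrite IHl. lra. Qed.

Lemma sum_delta l a y : NoDup l ->
  sumL l (fun i => if Nat.eqb a i then y else 0) =
  if in_dec PeanoNat.Nat.eq_dec a l then y else 0.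
Proof.
  induction l as [|b l IH]; intros Hnd; simpl; [reflexivity|].
  inversion Hnd; subst. unfold sumL in *; simpl. rewrite IH by auto.
  destruct (PeanoNat.Nat.eqb_spec a b).
  - subst. destruct (in_dec PeanoNat.Nat.eq_dec b l); [contradiction|].
    destruct (PeanoNat.Nat.eq_dec b b); [|congruence]. simpl. lra.
  - destruct (PeanoNat.Nat.eq_dec b a); [congruence|].
    destruct (in_dec PeanoNat.Nat.eq_dec a l); lra.
Qed.

Lemma sum_delta_in k a y : (1 <= a <= k)%nat ->
  sumL (seq 1 k) (fun i => if Nat.eqb a i then y else 0) = y.
Proof.
  intros H. rewrite sum_delta by apply seq_NoDup.
  destruct (in_dec PeanoNat.Nat.eq_dec a (seq 1 k)) as [|n]; auto.
  exfalso; apply n, in_seq; lia.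
Qed.

Lemma Rabs_le_inv' x a : Rabs x <= a -> -a <= x <= a.
Proof. unfold Rabs. destruct (Rcase_abs x); intros; lra. Qed.

Definition gf (s c : R) : R := if Req_EM_T c 0 then 0 else s ^ 2 / c.

Lemma gc_cons r D i : group_count (r :: D) i =
  (if Nat.eqb (fst r) i then 1 else 0) + group_count D i.
Proof. reflexivity. Qed.
Lemma gs_cons r D i : group_sum (r :: D) i =
  (if Nat.eqb (fst r) i then snd r else 0) + group_sum D i.
Proof. reflexivity. Qed.

Lemma gc_mid A r B i : group_count (A ++ r :: B) i =
  group_count (A ++ B) i + (if Nat.eqb (fst r) i then 1 else 0).
Proof. induction A; simpl; unfold group_count in *; simpl; try rewrite IHA; lra. Qed.
Lemma gs_mid A r B i : group_sum (A ++ r :: B) i =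
  group_sum (A ++ B) i + (if Nat.eqb (fst r) i then snd r else 0).
Proof. induction A; simpl; unfold group_sum in *; simpl; try rewrite IHA; lra. Qed.
Lemma ts_mid A r B : total_sum (A ++ r :: B) = total_sum (A ++ B) + snd r.
Proof. induction A; simpl; unfold total_sum in *; simpl; try rewrite IHA; lra. Qed.

Lemma bounds_sc L i : Forall (fun r => 0 <= snd r <= 1) L ->
  0 <= group_sum L i <= group_count L i.
Proof.
  induction L as [|r L IH]; intros HF; [unfold group_sum, group_count; simpl; lra|].
  inversion HF; subst. specialize (IH H2).
  rewrite gc_cons, gs_cons. destruct (Nat.eqb (fst r) i); lra.
Qed.

Lemma bounds_T L : Forall (fun r => 0 <= snd r <= 1) L ->
  0 <= total_sum L <= INR (length L).
Proof.
  induction L as [|r L IH]; intros HF; simpl; [lra|].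
  inversion HF; subst. specialize (IH H2).
  unfold total_sum in *; simpl fold_right. destruct (length L); simpl in *; lra.
Qed.

Lemma sum_counts k L : Forall (fun r => (1 <= fst r <= k)%nat) L ->
  sumL (seq 1 k) (group_count L) = INR (length L).
Proof.
  induction L as [|r L IH]; intros HF.
  - unfold sumL. simpl. induction (seq 1 k); simpl; auto. rewrite IHl; lra.
  - inversion HF; subst. simpl length. rewrite S_INR.
    rewrite (sumL_ext _ _ (fun i => (if Nat.eqb (fst r) i then 1 else 0) + group_count L i))
      by (intros; apply gc_cons).
    rewrite sumL_plus, IH, sum_delta_in by auto. lra.
Qed.

Lemma sum_sums k L : Forall (fun r => (1 <= fst r <= k)%nat) L ->
  sumL (seq 1 k) (group_sum L) = total_sum L.
Proof.
  induction L as [|r L IH]; intros HF.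
  - unfold sumL. simpl. induction (seq 1 k); simpl; auto. rewrite IHl; lra.
  - inversion HF; subst.
    rewrite (sumL_ext _ _ (fun i => (if Nat.eqb (fst r) i then snd r else 0) + group_sum L i))
      by (intros; apply gs_cons).
    rewrite sumL_plus, IH, sum_delta_in by auto. unfold total_sum; simpl. lra.
Qed.

Lemma ssa_term_eq L i :
  0 <= group_sum L i <= group_count L i ->
  ssa_term L i = gf (group_sum L i) (group_count L i)
     - 2 * overall_mean L * group_sum L i + overall_mean L ^ 2 * group_count L i.
Proof.
  intros Hb. unfold ssa_term, gf, group_mean.
  destruct (Req_EM_T (group_count L i) 0) as [e|e].
  - rewrite e in *. assert (group_sum L i = 0) by lra. rewrite H. ring.
  - field. auto.
Qed.

Definition G k L := sumL (seq 1 k) (fun i => gf (group_sum L i) (group_count L i)).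

Lemma SSA_eq k n L : (1 <= n)%nat -> valid_db k n L ->
  SSA k L = G k L - total_sum L ^ 2 / INR n.
Proof.
  intros Hn [Hl HF].
  assert (HF1 : Forall (fun r => (1 <= fst r <= k)%nat) L)
    by (eapply Forall_impl; [|exact HF]; simpl; tauto).
  assert (HF2 : Forall (fun r => 0 <= snd r <= 1) L)
    by (eapply Forall_impl; [|exact HF]; simpl; tauto).
  unfold SSA. change (fold_right Rplus 0 (map (ssa_term L) (seq 1 k)))
    with (sumL (seq 1 k) (ssa_term L)).
  rewrite (sumL_ext _ _ (fun i => (gf (group_sum L i) (group_count L i)
     - 2 * overall_mean L * group_sum L i) + overall_mean L ^ 2 * group_count L i))
    by (intros; apply ssa_term_eq, bounds_sc, HF2).
  rewrite sumL_plus, sumL_minus, !sumL_scal, sum_counts, sum_sums by auto.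
  unfold G, overall_mean. change (@length (nat*R) L) with (@length row L). rewrite Hl.
  assert (INR n > 0) by (apply lt_0_INR; lia). field. lra.
Qed.

Lemma key s c y : 0 <= s <= c -> 0 <= y <= 1 ->
  Rabs (gf (s + y) (c + 1) - gf s c) <= 1.
Proof.
  intros Hs Hy. unfold gf.
  destruct (Req_EM_T (c + 1) 0); [lra|].
  destruct (Req_EM_T c 0) as [e|e].
  - assert (s = 0) by lra. subst.
    replace ((0 + y) ^ 2 / (0 + 1) - 0) with (y * y) by field.
    apply Rabs_le. nra.
  - assert (c > 0) by lra.
    set (N := 2 * c * s * y + c * y ^ 2 - s ^ 2).
    assert (HN : (s + y) ^ 2 / (c + 1) - s ^ 2 / c = N / (c * (c + 1)))
      by (unfold N; field; lra).
    rewrite HN. apply Rabs_le.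
    assert (P : c * (c + 1) > 0) by nra.
    assert (N1 : N <= c * (c + 1)).
    { unfold N. assert (0 <= (c * y - s) ^ 2) by apply pow2_ge_0.
      assert (y ^ 2 <= 1) by nra.
      assert (c ^ 2 * y ^ 2 <= c ^ 2) by nra.
      assert (c * y ^ 2 <= c) by nra. nra. }
    assert (N2 : - (c * (c + 1)) <= N).
    { unfold N. assert (s ^ 2 <= c ^ 2) by nra.
      assert (0 <= c * s * y) by (apply Rmult_le_pos; [apply Rmult_le_pos|]; lra).
      assert (0 <= c * y ^ 2) by (apply Rmult_le_pos; [lra|apply pow2_ge_0]). nra. }
    split.
    + apply (Rmult_le_reg_r (c * (c + 1))); auto.
      unfold Rdiv. rewrite Rmult_assoc, Rinv_l by lra. lra.
    + apply (Rmult_le_reg_r (c * (c + 1))); auto.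
      unfold Rdiv. rewrite Rmult_assoc, Rinv_l by lra. lra.
Qed.

Lemma G_diff k A r B : (1 <= fst r <= k)%nat -> 0 <= snd r <= 1 ->
  Forall (fun r => 0 <= snd r <= 1) (A ++ B) ->
  Rabs (G k (A ++ r :: B) - G k (A ++ B)) <= 1.
Proof.
  intros Hr Hy HF. unfold G. rewrite <- sumL_minus.
  set (a := fst r).
  rewrite (sumL_ext _ _ (fun i => if Nat.eqb a i then
     gf (group_sum (A ++ B) a + snd r) (group_count (A ++ B) a + 1)
     - gf (group_sum (A ++ B) a) (group_count (A ++ B) a) else 0)).
  - rewrite sum_delta_in by auto. apply key; auto. apply bounds_sc; auto.
  - intros i _. rewrite gs_mid, gc_mid. unfold a.
    destruct (PeanoNat.Nat.eqb_spec (fst r) i).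
    + subst. reflexivity.
    + rewrite !Rplus_0_r. apply Rminus_diag_eq; reflexivity.
Qed.

Lemma split_nb : forall (D D' : list row) j, length D = length D' -> (j < length D)%nat ->
  (forall m, m <> j -> nth_error D m = nth_error D' m) ->
  exists A B r r', D = A ++ r :: B /\ D' = A ++ r' :: B.
Proof.
  induction D as [|x D IH]; intros D' j Hl Hj Hm; simpl in Hj; [lia|].
  destruct D' as [|x' D']; simpl in Hl; [lia|].
  destruct j as [|j].
  - exists nil, D, x, x'. split; auto. simpl. f_equal.
    apply nth_error_ext. intros m. symmetry. apply (Hm (S m)). lia.
  - assert (x = x') by (specialize (Hm 0%nat ltac:(lia)); simpl in Hm; congruence).
    subst. destruct (IH D' j) as (A & B & r & r' & E1 & E2); try lia.
    + intros m Hm'. apply (Hm (S m)). lia.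
    + exists (x' :: A), B, r, r'. subst. auto.
Qed.

Lemma final_comb a b e u v w : Rabs (a - e) <= 1 -> Rabs (b - e) <= 1 ->
  Rabs (u - v) <= 2 -> 0 <= w -> Rabs (a - u - (b - v)) <= 9 + w.
Proof.
  intros H1 H2 H3 H4. apply Rabs_le_inv' in H1, H2, H3. apply Rabs_le. lra.
Qed.

Theorem mainTheorem2 (k n : nat) (Hk : (1 <= k)%nat) (Hn : (1 <= n)%nat)
  (D D' : list row) :
  valid_db k n D -> valid_db k n D' -> neighboring D D' ->
  Rabs (SSA k D - SSA k D') <= 9 + 5 / INR n.
Proof.
  intros HD HD' [Hl (j & Hj & Hm)].
  rewrite (SSA_eq k n D), (SSA_eq k n D') by auto.
  destruct (split_nb D D' j Hl Hj Hm) as (A & B & r & r' & E1 & E2).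
  destruct HD as [HlD HFD]. destruct HD' as [HlD' HFD'].
  assert (HF2 : forall L, Forall (fun r => (1 <= fst r <= k)%nat /\ 0 <= snd r <= 1) L ->
     Forall (fun r => 0 <= snd r <= 1) L)
    by (intros; eapply Forall_impl; [|eassumption]; simpl; tauto).
  assert (TD := bounds_T D (HF2 _ HFD)). assert (TD' := bounds_T D' (HF2 _ HFD')).
  change (@length (nat*R) D) with (@length row D) in TD. change (@length (nat*R) D') with (@length row D') in TD'. rewrite HlD in TD. rewrite HlD' in TD'.
  subst D D'.
  apply Forall_app in HFD as [HA HrB]. apply Forall_cons_iff in HrB as [H1 HB].
  apply Forall_app in HFD' as [_ HrB']. apply Forall_cons_iff in HrB' as [H3 _].
  assert (HE : Forall (fun r => 0 <= snd r <= 1) (A ++ B))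
    by (apply HF2, Forall_app; auto).
  pose proof (G_diff k A r B (proj1 H1) (proj2 H1) HE) as G1.
  pose proof (G_diff k A r' B (proj1 H3) (proj2 H3) HE) as G2.
  rewrite ts_mid in TD |- *. rewrite ts_mid in TD' |- *.
  set (T := total_sum (A ++ B)) in *.
  assert (Hnp : INR n > 0) by (apply lt_0_INR; lia).
  assert (H5 : 0 <= 5 / INR n) by (apply Rlt_le, Rdiv_lt_0_compat; lra).
  assert (HT : Rabs ((T + snd r) ^ 2 / INR n - (T + snd r') ^ 2 / INR n) <= 2).
  { replace ((T + snd r) ^ 2 / INR n - (T + snd r') ^ 2 / INR n)
      with (((T + snd r) ^ 2 - (T + snd r') ^ 2) / INR n) by (field; lra).
    destruct H1, H3.
    assert (X1 : (T + snd r) ^ 2 - (T + snd r') ^ 2 <= 2 * INR n) by nra.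
    assert (X2 : - (2 * INR n) <= (T + snd r) ^ 2 - (T + snd r') ^ 2) by nra.
    apply Rabs_le; split.
    + apply (Rmult_le_reg_r (INR n)); auto.
      unfold Rdiv. rewrite Rmult_assoc, Rinv_l by lra. lra.
    + apply (Rmult_le_reg_r (INR n)); auto.
      unfold Rdiv. rewrite Rmult_assoc, Rinv_l by lra. lra. }
  set (u := (T + snd r) ^ 2 / INR n) in *. set (v := (T + snd r') ^ 2 / INR n) in *.
  eapply final_comb; eauto.
Qed.
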